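(* For integers $i\ge 0$ and $j\ge 0$, let $g^{(2)}_{i,j}$ be the number of 2-generalized grand Motzkin paths of length $i$ and height $j$. Then for every $j\ge 0$, $$M^{(j)}(x):=\sum_{i\ge 0} g^{(2)}_{i,j}x^i=\frac{F(x)^{j+1}\,C\big(F(x)^2\big)^j}{x\big(1-2F(x)^2C(F(x)^2)\big)},$$ where $F(x)=\frac{x}{1-x-x^2}$ and $C(x)=\frac{1-\sqrt{1-4x}}{2x}$. Moreover, for $0\le j\le i$, $$g^{(2)}_{i,j}=\sum_{m=0}^{i}\sum_{l=0}^{i-j-2m}\binom{2m+j}{m}\binom{l+j+2m}{l}\binom{l}{i-j-2m-l}.$$
   Context: A 2-generalized grand Motzkin path of length $n$ is a lattice path in $\mathbb{Z}\times\mathbb{Z}$ starting at $(0,0)$ and ending at a point with $x$-coordinate $n$, using steps $U=(1,1)$, $D=(1,-1)$, $H=(1,0)$ and $H_2=(2,0)$, with no restriction of staying above the $x$-axis. Its height is its final $y$-coordinate. $F(x)$ is the generating function of the Fibonacci numbers and $C(x)$ that of the Catalan numbers; $C(F(x)^2)$ denotes composition of formal power series. Sums with upper limit smaller than the lower limit are empty. *)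

(* Defs.v *)
From HB Require Import structures.
From mathcomp Require Import all_boot all_order all_algebra.
Set Implicit Arguments. Unset Strict Implicit. Unset Printing Implicit Defensive.
Import Order.TTheory GRing.Theory Num.Theory.

(* Steps of a 2-generalized grand Motzkin path:
   U=(1,1), D=(1,-1), H=(1,0), H2=(2,0). *)
Inductive step := U | D | H | H2.

Definition step_code (s : step) : nat :=
  match s with U => 0 | D => 1 | H => 2 | H2 => 3 end.
Definition step_decode (n : nat) : option step :=
  match n with 0 => Some U | 1 => Some D | 2 => Some H | 3 => Some H2 | _ => None end.
Lemma step_codeK : pcancel step_code step_decode.
Proof. by case. Qed.

HB.instance Definition _ := Equality.copy step (pcan_type step_codeK).
HB.instance Definition _ := Choice.copy step (pcan_type step_codeK).
HB.instance Definition _ := Countable.copy step (pcan_type step_codeK).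

Definition step_enum : seq step := [:: U; D; H; H2].
Lemma step_enumP : Finite.axiom step_enum.
Proof. by case. Qed.
HB.instance Definition _ := isFinite.Build step step_enumP.

Definition step_dx (s : step) : nat := match s with H2 => 2 | _ => 1 end.
Definition step_dy (s : step) : int :=
  (match s with U => 1 | D => -1 | _ => 0 end)%R.

(* A path is a sequence of steps starting at (0,0); its length is the final
   x-coordinate and its height the final y-coordinate. *)
Definition plen (p : seq step) : nat := \sum_(s <- p) step_dx s.
Definition pheight (p : seq step) : int := (\sum_(s <- p) step_dy s)%R.

(* A path of length i has at most i steps, so we count, for each
   number of steps k <= i, the k-tuples of steps with the right endpoint. *)
Definition g2 (i j : nat) : nat :=
  \sum_(k < i.+1)
     #|[set t : k.-tuple step | (plen t == i) && (pheight t == (j%:Z)%R)]|.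

Definition series := nat -> int.

Local Open Scope ring_scope.

Definition mulS (a b : series) : series :=
  fun n => \sum_(k < n.+1) a k * b (n - k)%N.
Definition addS (a b : series) : series := fun n => a n + b n.
Definition scaleS (c : int) (a : series) : series := fun n => c * a n.
Definition oneS : series := fun n => (n == 0%N)%:R.
Definition xS : series := fun n => (n == 1%N)%:R.
Definition powS (a : series) (k : nat) : series := iter k (mulS a) oneS.
(* composition c(g), meaningful when g 0 = 0 *)
Definition compS (c g : series) : series :=
  fun n => \sum_(k < n.+1) c k * powS g k n.

Fixpoint fib (n : nat) : nat :=
  match n with
  | 0 => 0
  | 1 => 1
  | (m.+1 as p).+1 => fib p + fib m
  end%N.
Definition catalan (n : nat) : nat := ('C(n.*2, n) %/ n.+1)%N.

(* F(x) = x/(1-x-x^2), generating function of the Fibonacci numbers *)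
Definition Fser : series := fun n => (fib n)%:Z.
(* C(x) = (1 - sqrt(1-4x))/(2x), generating function of the Catalan numbers *)
Definition Cser : series := fun n => (catalan n)%:Z.

Definition Mser (j : nat) : series := fun i => (g2 i j)%:Z.

(* Main.v *)
Require Import Defs.
From mathcomp Require Import all_boot all_order all_algebra.
From mathcomp Require Import ring zify.
Import GRing.Theory.
Local Open Scope ring_scope.

Lemma big_step (F : step -> nat) : (\sum_(s : step) F s = F U + F D + F H + F H2)%N.
Proof. by rewrite unlock /reducebig /index_enum /= !unlock /= addn0 !addnA. Qed.

Definition eqm (N : nat) (p q : {poly int}) := forall k, (k < N)%N -> p`_k = q`_k.

Lemma eqm_refl N p : eqm N p p. Proof. by []. Qed.
Lemma eqm_sym N p q : eqm N p q -> eqm N q p.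
Proof. by move=> h k hk; rewrite h. Qed.
Lemma eqm_trans N p q r : eqm N p q -> eqm N q r -> eqm N p r.
Proof. by move=> h1 h2 k hk; rewrite h1 ?h2. Qed.
Lemma eqm_le N M p q : (M <= N)%N -> eqm N p q -> eqm M p q.
Proof. by move=> hMN h k hk; rewrite h //; apply: leq_trans hMN. Qed.
Lemma eqmD N p q p' q' : eqm N p p' -> eqm N q q' -> eqm N (p + q) (p' + q').
Proof. by move=> h1 h2 k hk; rewrite !coefD h1 ?h2. Qed.
Lemma eqmN N p p' : eqm N p p' -> eqm N (- p) (- p').
Proof. by move=> h1 k hk; rewrite !coefN h1. Qed.
Lemma eqmB N p q p' q' : eqm N p p' -> eqm N q q' -> eqm N (p - q) (p' - q').
Proof. by move=> h1 h2; apply: eqmD => //; apply: eqmN. Qed.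
Lemma eqmM N p q p' q' : eqm N p p' -> eqm N q q' -> eqm N (p * q) (p' * q').
Proof.
move=> h1 h2 k hk; rewrite !coefM; apply: eq_bigr => i _.
have hi : (i < N)%N by apply: leq_ltn_trans hk; rewrite -ltnS.
rewrite h1 // h2 //; apply: leq_ltn_trans hk; exact: leq_subr.
Qed.
Lemma eqmX N p p' n : eqm N p p' -> eqm N (p ^+ n) (p' ^+ n).
Proof. by move=> h; elim: n => [|n IH]; rewrite ?expr0 // !exprS; apply: eqmM. Qed.
Lemma eqm_sum N (I : finType) (F G : I -> {poly int}) :
  (forall i, eqm N (F i) (G i)) -> eqm N (\sum_i F i) (\sum_i G i).
Proof. by move=> h k hk; rewrite !coef_sum; apply: eq_bigr => i _; rewrite h. Qed.
Lemma eqmEq N p q : p = q -> eqm N p q. Proof. by move->. Qed.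

Lemma eqm_XnM N (p q : {poly int}) : eqm N ('X^N * p) q -> eqm N q 0.
Proof. by move=> h k hk; rewrite -h // coefXnM hk coef0. Qed.
Lemma coefXnM0 N (p : {poly int}) k : (k < N)%N -> ('X^N * p)`_k = 0.
Proof. by move=> hk; rewrite coefXnM hk. Qed.

Lemma coef_exp0 (h : {poly int}) i k : h`_0 = 0 -> (k < i)%N -> (h ^+ i)`_k = 0.
Proof.
move=> h0; elim: i k => [//|i IH] k hk.
rewrite exprS coefM; apply: big1 => [[j hj]] _ /=.
case: j hj => [|j] hj; first by rewrite h0 mul0r.
by rewrite IH ?mulr0 //; lia.
Qed.

Definition T N (a : series) : {poly int} := \poly_(i < N) a i.
Lemma coefT N a k : (k < N)%N -> (T N a)`_k = a k.
Proof. by move=> hk; rewrite coef_poly hk. Qed.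

Lemma mulS_coef N a b k : (k < N)%N -> mulS a b k = (T N a * T N b)`_k.
Proof.
move=> hk; rewrite coefM /mulS; apply: eq_bigr => [[i hi]] _ /=.
rewrite !coefT //; lia.
Qed.

Lemma T_mulS N a b : eqm N (T N (mulS a b)) (T N a * T N b).
Proof. by move=> k hk; rewrite coefT // (@mulS_coef N a b k hk). Qed.
Lemma T_addS N a b : eqm N (T N (addS a b)) (T N a + T N b).
Proof. by move=> k hk; rewrite coefD !coefT. Qed.
Lemma T_scaleS N c a : eqm N (T N (scaleS c a)) (c%:P * T N a).
Proof. by move=> k hk; rewrite coefCM !coefT. Qed.
Lemma T_oneS N : eqm N (T N oneS) 1.
Proof. by move=> k hk; rewrite coefT // coef1. Qed.
Lemma T_xS N : eqm N (T N xS) 'X.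
Proof. by move=> k hk; rewrite coefT // coefX. Qed.
Lemma T_powS N a n : eqm N (T N (powS a n)) (T N a ^+ n).
Proof.
elim: n => [|n IH]; first exact: T_oneS.
rewrite exprS; apply: eqm_trans (T_mulS _ _ _) _.
exact: eqmM.
Qed.

Lemma T_compS N c g : g 0%N = 0 -> eqm N (T N (compS c g)) (T N c \Po T N g).
Proof.
move=> g0 k hk; rewrite coefT // /compS coef_comp_poly.
have h0 : (T N g)`_0 = 0 by rewrite coef_poly; case: N hk => //.
have E : forall i, (T N g ^+ i)`_k = powS g i k.
  by move=> i; rewrite -(T_powS N g i) // coefT.
have -> : \sum_(i < size (T N c)) (T N c)`_i * (T N g ^+ i)`_k
        = \sum_(i < N) c i * powS g i k.
  rewrite (big_ord_widen N (fun i => (T N c)`_i * (T N g ^+ i)`_k)) ?size_poly //.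
  rewrite big_mkcond; apply: eq_bigr => [[i hi]] _ /=.
  case: ifP => hs; first by rewrite coefT // E.
  by rewrite -(@coefT N c i hi) nth_default ?mul0r // leqNgt hs.
rewrite (big_ord_widen N (fun i => c i * powS g i k) hk) big_mkcond.
apply: eq_bigr => [[i hi]] _ /=; case: ifP => // hik.
by rewrite -E coef_exp0 ?mulr0 //; lia.
Qed.


Lemma coef_W (p : {poly int}) k :
  ((1 - 'X - 'X^2) * p)`_k =
  p`_k - (if k == 0%N then 0 else p`_k.-1)
       - (if k == 0%N then 0 else if k.-1 == 0%N then 0 else p`_k.-2).
Proof.
have -> : (1 - 'X - 'X^2) * p = p - 'X * p - 'X * ('X * p) by ring.
by rewrite !coefB !coefXM; case: k => // -[].
Qed.

Lemma uniq_sys N (A : int -> {poly int}) :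
  (forall y, eqm N ((1 - 'X - 'X^2) * A y) ('X * (A (y - 1) + A (y + 1)))) ->
  forall y, eqm N (A y) 0.
Proof.
move=> h y k; elim/ltn_ind: k y => k IH y hk; rewrite coef0.
have := h y k hk; rewrite coef_W coefXM coefD.
case: k IH hk => [|k] IH hk /=; first by rewrite !subr0.
have Z : forall z j, (j < k.+1)%N -> (A z)`_j = 0.
  by move=> z j hj; rewrite IH ?coef0 //; lia.
rewrite (Z y k) // (Z (y - 1) k) // (Z (y + 1) k) // addr0 subr0.
case: k IH hk Z => [|k] IH hk Z /=; first by rewrite subr0.
by rewrite (Z y k) // subr0.
Qed.


Definition cntk k i (y : int) : nat :=
  (\sum_(t : k.-tuple step) ((plen t == i) && (pheight t == y)))%N.

Lemma card_cntk k i y :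
  #|[set t : k.-tuple step | (plen t == i) && (pheight t == y)]| = cntk k i y.
Proof.
rewrite cardsE -sum1_card /cntk big_mkcond /=.
by apply: eq_bigr => t _; rewrite unfold_in; case: ifP.
Qed.

Lemma cntk0 i y : cntk 0 i y = ((i == 0%N) && (y == 0) : nat).
Proof.
rewrite /cntk.
transitivity (\sum_(t : 0.-tuple step) ((i == 0%N) && (y == 0) : nat))%N.
  apply: eq_bigr => t _; rewrite (tuple0 t) /plen /pheight /= !big_nil.
  by rewrite eq_sym (eq_sym _ y).
by rewrite big_const card_tuple /= addn0.
Qed.

Lemma cntkS k i y : cntk k.+1 i y =
  (\sum_(s : step) (if (step_dx s <= i)%N
                   then cntk k (i - step_dx s) (y - step_dy s) else 0))%N.
Proof.
rewrite /cntk.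
rewrite (reindex (fun p : step * k.-tuple step => [tuple of p.1 :: p.2])) /=; last first.
  exists (fun t : k.+1.-tuple step => (thead t, [tuple of behead t])).
    by move=> [s t] _ /=; rewrite theadE; congr pair; apply: val_inj.
  by move=> t _ /=; rewrite -tuple_eta.
rewrite -(pair_big xpredT xpredT (fun s (t : k.-tuple step) =>
   ((plen [tuple of s :: t] == i) && (pheight [tuple of s :: t] == y) : nat))) /=.
apply: eq_bigr => s _.
case: ifP => hs; last first.
  apply: big1 => t _; rewrite /plen big_cons.
  by case: eqP => //= E; move: hs; rewrite -E leq_addr.
apply: eq_bigr => t _; rewrite /plen /pheight !big_cons.
congr (nat_of_bool _); congr andb.
  by apply/eqP/eqP; lia.
by apply/eqP/eqP => [<-|->]; ring.
Qed.

Lemma cntk_gt k i y : (i < k)%N -> cntk k i y = 0%N.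
Proof.
elim: k i y => [//|k IH] i y hk; rewrite cntkS big_step /=.
apply/eqP; rewrite !addn_eq0 -!andbA; apply/and4P; split; case: ifP => h //;
  rewrite IH //; lia.
Qed.

Definition Pc i y : nat := (\sum_(k < i.+1) cntk k i y)%N.

Lemma Pc_widen K i y : (i < K)%N -> Pc i y = (\sum_(k < K) cntk k i y)%N.
Proof.
move=> hK; rewrite /Pc (big_ord_widen K (fun k => cntk k i y) hK) big_mkcond.
apply: eq_bigr => [[k hk]] _ /=; case: ifP => // h.
by rewrite cntk_gt //; lia.
Qed.

Lemma Pc0 y : Pc 0 y = (y == 0 : nat).
Proof. by rewrite /Pc big_ord1 cntk0. Qed.

Lemma PcS i y : Pc i.+1 y =
  (Pc i (y - 1) + Pc i (y + 1) + Pc i y + (if i is i'.+1 then Pc i' y else 0))%N.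
Proof.
rewrite /Pc big_ord_recl cntk0 /= add0n.
rewrite (eq_bigr (fun k : 'I_i.+1 => \sum_(s : step) (if (step_dx s <= i.+1)%N
                   then cntk k (i.+1 - step_dx s) (y - step_dy s) else 0))%N); last first.
  by move=> k _; rewrite /bump /= cntkS.
rewrite exchange_big big_step /= !subSS !subn0.
have -> : y - (-1) = y + 1 by ring.
rewrite subr0; congr (_ + _)%N.
case: i => [|i] /=; first by rewrite big1.
rewrite subSS subn0; symmetry; exact: (Pc_widen i.+2 i y (leqnSn i.+1)).
Qed.

Definition Pp N (y : int) : {poly int} := \poly_(i < N) (Pc i y)%:Z.

Lemma Pp_rec N y : eqm N ((1 - 'X - 'X^2) * Pp N y)
  (((y == 0)%:R)%:P + 'X * (Pp N (y - 1) + Pp N (y + 1))).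
Proof.
move=> k hk; rewrite coef_W coefD coefC coefXM coefD !coef_poly.
case: k hk => [|k] hk /=; first by rewrite hk Pc0 !subr0 ?addr0; case: (y == 0).
rewrite hk (ltnW hk) PcS; case: k hk => [|k] hk /=.
  by rewrite add0r addn0 subr0 !PoszD; ring.
rewrite (ltnW (ltnW hk)) !PoszD add0r; ring.
Qed.


Lemma fib_eqm N : eqm N ((1 - 'X - 'X^2) * T N Fser) 'X.
Proof.
move=> k hk; rewrite coef_W coefX !coefT //; try lia.
rewrite /Fser; case: k hk => [|[|k]] hk //=.
by rewrite PoszD; ring.
Qed.

Lemma fib0 N : (T N Fser)`_0 = 0.
Proof. by rewrite coef_poly; case: N. Qed.

Lemma cat_mul n : (n.+1 * catalan n = 'C(n.*2, n))%N.
Proof.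
rewrite /catalan; apply/eqP; rewrite mulnC -dvdn_eq.
have h := mul_bin_left n.*2 n.
have e : (n.*2 - n = n)%N by rewrite -addnn addnK.
rewrite e in h.
apply/dvdnP; exists ('C(n.*2, n) - 'C(n.*2, n.+1))%N.
move: h; set a := 'C(n.*2, n); set b := 'C(n.*2, n.+1) => h.
have hb : (b <= a)%N.
  rewrite -(leq_pmul2l (ltn0Sn n)) h leq_mul2r leqnSn orbT //.
rewrite mulnBl; nia.
Qed.

Lemma cat_rec n : (n.+2 * catalan n.+1 = (4 * n + 2) * catalan n)%N.
Proof.
have h1 := cat_mul n.+1; have h0 := cat_mul n.
have d1 := mul_bin_diag n.*2.+2 n.
have d2 := mul_bin_diag n.*2.+1 n.
have s : 'C(n.*2.+1, n) = 'C(n.*2.+1, n.+1).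
  rewrite -bin_sub; last by lia.
  by congr binomial; lia.
rewrite doubleS in h1; rewrite /= in d1 d2.
apply/eqP; rewrite -(eqn_pmul2l (ltn0Sn n)); apply/eqP.
nia.
Qed.

Lemma coef_14X (p : {poly int}) k :
  ((1 - 4%:R * 'X) * p)`_k = p`_k - (if k == 0%N then 0 else p`_k.-1) *+ 4.
Proof.
have -> : (1 - 4%:R * 'X) * p = p - ('X * p) *+ 4 by ring.
by rewrite coefB coefMn coefXM.
Qed.

Lemma mulrn_int (a : int) n : a *+ n = a * n%:Z.
Proof. by rewrite -mulr_natr natz. Qed.

Section Cat.
Variable N : nat.
Let cp := T N Cser.
Let A := 'X * cp.

Lemma cat_ode : eqm N ((1 - 4%:R * 'X) * A^`()) (1 - 2%:R * A).
Proof.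
move=> k hk; rewrite coef_14X !coef_deriv coefB coef1 -mulr_natl -polyC_natr.
rewrite coefCM /A !coefXM /cp.
case: k hk => [|k] hk /=.
  by rewrite coefT // /Cser /catalan /= mul0r subr0 mulr0 subr0.
rewrite !coefT //; try lia.
rewrite /Cser !mulrn_int.
have e := cat_rec k.
have e' : (catalan k.+1 : int) * (k.+2)%:Z = (catalan k : int) * (4 * k + 2)%:Z.
  by rewrite -!PoszM mulnC e mulnC.
rewrite e' !PoszD; ring.
Qed.

Let G := A ^+ 2 - A + 'X.

Lemma G_ode : eqm N ((1 - 4%:R * 'X) * G^`()) (- 4%:R * G).
Proof.
have dG : G^`() = 2%:R * A * A^`() - A^`() + 1.
  rewrite /G expr2 derivD derivB derivM derivX; ring.
rewrite dG.
have -> : (1 - 4%:R * 'X) * (2%:R * A * A^`() - A^`() + 1)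
        = (2%:R * A - 1) * ((1 - 4%:R * 'X) * A^`()) + (1 - 4%:R * 'X) by ring.
apply: eqm_trans.
  apply: eqmD; last exact: eqm_refl.
  apply: eqmM; first exact: eqm_refl.
  exact: cat_ode.
apply: eqmEq; rewrite /G; ring.
Qed.

Lemma G0 : forall k, (k <= N)%N -> G`_k = 0.
Proof.
have h0 : G`_0 = 0.
  by rewrite /G /A coefD coefB expr2 -mulrA !coefXM coefX.
elim=> [//|k IH] hk.
have := G_ode k hk; rewrite coef_14X !coef_deriv mulNr coefN mulr_natl coefMn IH ?(ltnW hk) //.
rewrite mul0rn oppr0.
have -> : (if k == 0%N then 0 else G`_k.-1.+1 *+ k.-1.+1) = 0.
  by case: k IH hk => //= k IH hk; rewrite IH ?mul0rn // ltnW.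
rewrite subr0 mulrn_int => /eqP; rewrite mulf_eq0 => /orP [/eqP //|].
by rewrite -[0]/(Posz 0).
Qed.

Lemma cat_eq : eqm N cp (1 + 'X * cp ^+ 2).
Proof.
move=> k hk; have := G0 k.+1 hk.
have -> : G = 'X * ('X * cp ^+ 2 - cp + 1) by rewrite /G /A; ring.
rewrite coefXM /= coefD coefB => e; rewrite coefD.
apply/eqP; rewrite -subr_eq0 -oppr_eq0; apply/eqP; apply: etrans e; ring.
Qed.
End Cat.


Lemma eqmZ N (c : int) (p q : {poly int}) : eqm N p q -> eqm N (c *: p) (c *: q).
Proof. by move=> h k hk; rewrite !coefZ h. Qed.

Lemma comp_eqm_r N (p h h' : {poly int}) : eqm N h h' -> eqm N (p \Po h) (p \Po h').
Proof.
move=> e; rewrite !comp_polyE; apply: eqm_sum => i; apply: eqmZ; exact: eqmX.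
Qed.

Lemma comp_eqm_l N (p q h : {poly int}) : h`_0 = 0 -> eqm N p q -> eqm N (p \Po h) (q \Po h).
Proof.
move=> h0 e k hk; apply/eqP; rewrite -subr_eq0 -coefB -comp_polyB.
rewrite coef_comp_poly; apply/eqP; apply: big1 => [[i hi]] _ /=.
case: (ltnP i N) => hiN; first by rewrite coefB e ?subrr ?mul0r.
by rewrite coef_exp0 ?mulr0 //; apply: leq_trans hk hiN.
Qed.

Lemma comp_cat N (h : {poly int}) : h`_0 = 0 ->
  eqm N (T N Cser \Po h) (1 + h * (T N Cser \Po h) ^+ 2).
Proof.
move=> h0; apply: eqm_trans (@comp_eqm_l N _ _ h h0 (cat_eq N)) _.
by apply: eqmEq; rewrite comp_polyD comp_polyM expr2 comp_polyM comp_polyX -(polyC1) comp_polyC.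
Qed.


Lemma abs_cases (y : int) :
  (y = 0 /\ absz (y - 1) = 1%N /\ absz (y + 1) = 1%N /\ absz (y) = 0%N) \/
  (exists m, y != 0 /\ absz (y) = m.+1 /\
     ((absz (y - 1) = m /\ absz (y + 1) = m.+2) \/ (absz (y - 1) = m.+2 /\ absz (y + 1) = m))).
Proof.
case: y => [[|m]|m].
- by left.
- right; exists m; split => //; split => //; left; split; lia.
- right; exists m; split => //; split => //; right; split; lia.
Qed.

Lemma cand_rhs N (f v : {poly int}) (y : int) : eqm N v (f + f * v ^+ 2) ->
  eqm N ('X * v ^+ absz (y))
   (((y == 0)%:R)%:P * ('X * (1 - 2%:R * f * v))
    + 'X * (f * v ^+ absz (y - 1) + f * v ^+ absz (y + 1))).
Proof.
move=> hv; case: (abs_cases y) => [[-> [-> [-> ->]]]|[m [/negPf -> [-> H]]]].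
  by apply: eqmEq; rewrite eqxx /= polyC1; ring.
rewrite mul0r add0r.
have -> : 'X * (f * v ^+ absz (y - 1) + f * v ^+ absz (y + 1)) = 'X * v ^+ m * (f + f * v ^+ 2).
  by case: H => [[-> ->]|[-> ->]]; rewrite !exprS; ring.
have -> : 'X * v ^+ m.+1 = 'X * v ^+ m * v by rewrite exprS; ring.
by apply: eqmM => //; apply: eqm_refl.
Qed.

Section Part1.
Variable N : nat.
Let f := T N Fser.
Let c2 := T N Cser \Po f ^+ 2.
Let v := f * c2.

Lemma f2_0 : (f ^+ 2)`_0 = 0.
Proof. by rewrite expr2 coefM big_ord1 fib0 mul0r. Qed.

Lemma v_eq : eqm N v (f + f * v ^+ 2).
Proof.
apply: (@eqm_trans N _ _ _ (@eqmM N f _ f _ (eqm_refl N f) (@comp_cat N (f^+2) f2_0))).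
by apply: eqmEq; rewrite /v /c2; ring.
Qed.

Let Ey y := 'X * Pp N y * (1 - 2%:R * f * v).
Let Ry y := f * v ^+ absz y.

Lemma sys1 y : eqm N ((1 - 'X - 'X^2) * (Ey y - Ry y))
   ('X * ((Ey (y - 1) - Ry (y - 1)) + (Ey (y + 1) - Ry (y + 1)))).
Proof.
have -> : (1 - 'X - 'X^2) * (Ey y - Ry y) =
   'X * (1 - 2%:R * f * v) * ((1 - 'X - 'X^2) * Pp N y)
   - ((1 - 'X - 'X^2) * f) * v ^+ absz y by rewrite /Ey /Ry; ring.
apply: eqm_trans.
  apply: eqmB; first by apply: eqmM; [exact: eqm_refl | exact: Pp_rec].
  by apply: eqmM; [exact: fib_eqm | exact: eqm_refl].
apply: eqm_trans.
  apply: eqmB; first exact: eqm_refl.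
  exact: (@cand_rhs N f v y v_eq).
by apply: eqmEq; rewrite /Ey /Ry; ring.
Qed.

Lemma part1_poly j : eqm N ('X * Pp N (Posz j) * (1 - 2%:R * f * v)) (f * v ^+ j).
Proof.
have e := @uniq_sys N (fun y => Ey y - Ry y) sys1 (Posz j).
move=> k hk; have := e k hk; rewrite /Ey /Ry /= coefB coef0 => /eqP; rewrite subr_eq0 => /eqP //.

Qed.
End Part1.


Lemma g2_Pc i j : g2 i j = Pc i (Posz j).
Proof. by rewrite /g2 /Pc; apply: eq_bigr => k _; exact: card_cntk. Qed.

Lemma T_Mser N j : T N (Mser j) = Pp N (Posz j).
Proof. by apply/polyP => i; rewrite !coef_poly /Mser g2_Pc. Qed.

Lemma powS2_0 : powS Fser 2 0%N = 0.
Proof. by rewrite /powS /= /mulS !big_ord1 /Fser /= mul0r. Qed.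

Theorem part1 : forall j : nat, forall n : nat,
     let CF2 := compS Cser (powS Fser 2) in
     mulS (mulS xS (Mser j))
          (addS oneS (scaleS (-2) (mulS (powS Fser 2) CF2))) n
     = mulS (powS Fser j.+1) (powS CF2 j) n.
Proof.
move=> j n CF2; set N := n.+1.
set f := T N Fser; set c2 := T N Cser \Po f ^+ 2.
have hc : eqm N (T N CF2) c2.
  apply: (@eqm_trans N _ _ _ (@T_compS N Cser (powS Fser 2) powS2_0)).
  exact: comp_eqm_r (T_powS N Fser 2).
have hn : (n < N)%N by [].
set LS := mulS (mulS xS (Mser j)) (addS oneS (scaleS (-2) (mulS (powS Fser 2) CF2))).
set RS := mulS (powS Fser j.+1) (powS CF2 j).
have hL : eqm N (T N LS) ('X * Pp N (Posz j) * (1 - 2%:R * f * (f * c2))).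
  apply: (@eqm_trans N _ _ _ (T_mulS N _ _)).
  apply: (@eqm_trans N _ (('X * Pp N (Posz j)) * (1 + (-2)%:P * (f ^+ 2 * c2)))).
    apply: eqmM.
      apply: (@eqm_trans N _ _ _ (T_mulS N _ _)).
      by rewrite T_Mser; apply: eqmM; [exact: T_xS | exact: eqm_refl].
    apply: (@eqm_trans N _ _ _ (T_addS N _ _)).
    apply: eqmD; first exact: T_oneS.
    apply: (@eqm_trans N _ _ _ (T_scaleS N _ _)).
    apply: eqmM; first exact: eqm_refl.
    apply: (@eqm_trans N _ _ _ (T_mulS N _ _)).
    by apply: eqmM; [exact: T_powS | exact: hc].
  by apply: eqmEq; rewrite polyCN polyC_natr; ring.
have hR : eqm N (T N RS) (f * (f * c2) ^+ j).
  apply: (@eqm_trans N _ _ _ (T_mulS N _ _)).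
  apply: (@eqm_trans N _ (f ^+ j.+1 * c2 ^+ j)).
    by apply: eqmM; [exact: T_powS | apply: (@eqm_trans N _ _ _ (T_powS N _ _)); exact: eqmX].
  by apply: eqmEq; rewrite exprMn exprS; ring.
rewrite -(@coefT N LS n hn) -(@coefT N RS n hn) hL // hR //.
exact: (@part1_poly N j n hn).
Qed.


Lemma eqm_add0 N (p q : {poly int}) : eqm N q 0 -> eqm N (p + q) p.
Proof. by move=> h k hk; rewrite coefD h // coef0 addr0. Qed.

Definition uu : {poly int} := 'X + 'X^2.
Lemma uu0 : uu`_0 = 0.
Proof. by rewrite /uu coefD coefX coefXn. Qed.

Lemma EsK_S K n : (1 - uu) * (\sum_(l < K.+1) ('C(n.+1 + l, l))%:R * uu ^+ l)
  = (\sum_(l < K.+1) ('C(n + l, l))%:R * uu ^+ l) - ('C(n.+1 + K, K))%:R * uu ^+ K.+1.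
Proof.
elim: K => [|K IH].
  by rewrite !big_ord1 !addn0 !bin0 expr1 expr0; ring.
rewrite big_ord_recr [in RHS]big_ord_recr /= mulrDr IH.
have P : ('C(n.+1 + K.+1, K.+1) = 'C(n + K.+1, K.+1) + 'C(n.+1 + K, K))%N.
  by rewrite addnS binS addSnnS.
rewrite P natrD [uu ^+ K.+2]exprS; ring.
Qed.

Lemma Es0K K : (1 - uu) * (\sum_(l < K.+1) ('C(0 + l, l))%:R * uu ^+ l) = 1 - uu ^+ K.+1.
Proof.
elim: K => [|K IH]; first by rewrite big_ord1 bin0 expr1 expr0; ring.
rewrite big_ord_recr /= mulrDr IH add0n binn [uu ^+ K.+2]exprS; ring.
Qed.

Lemma eqm_drop N (p c : {poly int}) K : (N <= K)%N -> eqm N (p - c * uu ^+ K) p.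
Proof.
move=> hK k hk; rewrite coefB coefM big1 ?subr0 // => [[i hi]] _ /=.
by rewrite coef_exp0 ?mulr0 ?uu0 //; lia.
Qed.

Section Part2.
Variable N' : nat.
Let N := N'.+1.
Definition Es n := \sum_(l < N.+1) ('C(n + l, l))%:R * uu ^+ l.

Lemma Es_rec n : eqm N ((1 - uu) * Es n.+1) (Es n).
Proof. by rewrite /Es EsK_S; apply: eqm_drop. Qed.

Lemma Es_0 : eqm N ((1 - uu) * Es 0) 1.
Proof.
rewrite /Es Es0K; have := @eqm_drop N 1 1 N.+1 (leqnSn N).
by rewrite mul1r.
Qed.


Definition Sn (n : nat) : {poly int} := (('X^n : {poly int}) * Es n)%R.

Lemma S_rec n : eqm N ((1 - uu) * Sn n.+1) ('X * Sn n).
Proof.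
have -> : (1 - uu) * Sn n.+1 = 'X^(n.+1) * ((1 - uu) * Es n.+1) by rewrite /Sn; ring.
apply: eqm_trans; first by apply: eqmM; [exact: eqm_refl | exact: Es_rec].
by apply: eqmEq; rewrite /Sn exprS; ring.
Qed.

Lemma S_0 : eqm N ((1 - uu) * Sn 0) 1.
Proof. by rewrite /Sn expr0 mul1r; exact: Es_0. Qed.

Lemma S_big (c : {poly int}) n : (N <= n)%N -> eqm N (c * Sn n) 0.
Proof.
move=> hn k hk; rewrite coef0.
have -> : c * Sn n = ('X^n) * (c * Es n) by rewrite /Sn; ring.
by rewrite coefXnM0 //; apply: leq_trans hk hn.
Qed.

Definition Rn (j : nat) : {poly int} := \sum_(m < N) ('C(2 * m + j, m))%:R * Sn (2 * m + j).

Lemma sum_shift (g : nat -> {poly int}) : g 0%N = 0 ->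
  \sum_(m < N) g m.+1 = \sum_(m < N) g m + g N.
Proof.
move=> g0.
have h1 : \sum_(i < N.+1) g i = g 0%N + \sum_(i < N) g i.+1 := big_ord_recl N g.
have h2 : \sum_(i < N.+1) g i = \sum_(i < N) g i + g N := big_ord_recr N g.
by rewrite -h2 h1 g0 add0r.
Qed.

Lemma L1 j : eqm N ((1 - uu) * Rn j.+1) ('X * (Rn j + Rn j.+2)).
Proof.
rewrite /Rn mulr_sumr.
apply: (@eqm_trans N _ (\sum_(m < N) ('C(2 * m + j.+1, m))%:R * ('X * Sn (2 * m + j)))).
  apply: eqm_sum => m.
  have -> : (1 - uu) * (('C(2 * m + j.+1, m))%:R * Sn (2 * m + j.+1))
     = ('C(2 * m + j.+1, m))%:R * ((1 - uu) * Sn (2 * m + j).+1) by rewrite addnS; ring.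
  by apply: eqmM; [exact: eqm_refl | exact: S_rec].
pose g (m : nat) := (if m is m'.+1 then 'C(2 * m + j, m') else 0)%:R * ('X * Sn (2 * m + j)).
have e2 : \sum_(m < N) ('C(2 * m + j.+2, m))%:R * Sn (2 * m + j.+2)
          = \sum_(m < N) 'X^0 * ('C(2 * m + j.+2, m))%:R * Sn (2 * m + j.+2).
  by apply: eq_bigr => m _; rewrite expr0 mul1r.
have e3 : 'X * \sum_(m < N) ('C(2 * m + j.+2, m))%:R * Sn (2 * m + j.+2)
          = \sum_(m < N) g m.+1.
  rewrite mulr_sumr; apply: eq_bigr => m _; rewrite /g.
  have -> : (2 * m.+1 + j = 2 * m + j.+2)%N by lia.
  ring.
rewrite mulrDr e3 sum_shift; last by rewrite /g mul0r.
rewrite addrA; apply: eqm_sym.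
apply: eqm_trans; first apply: eqm_add0.
  by rewrite /g mulrA; apply: S_big; rewrite /N; lia.
rewrite mulr_sumr -big_split /=.
apply: eqmEq; apply: eq_bigr => m _; rewrite /g.
case: (nat_of_ord m) => [|m'] /=.
  by rewrite !muln0 !add0n !bin0; ring.
have -> : ('C(2 * m'.+1 + j.+1, m'.+1) = 'C(2 * m'.+1 + j, m'.+1) + 'C(2 * m'.+1 + j, m'))%N.
  by rewrite addnS binS.
rewrite natrD; ring.
Qed.

Lemma L0 : eqm N ((1 - uu) * Rn 0) (1 + 'X * (Rn 1 + Rn 1)).
Proof.
rewrite /Rn mulr_sumr big_ord_recl /=.
apply: (@eqm_trans N _ (1 + \sum_(m < N') ('C(2 * m.+1, m.+1))%:R * ('X * Sn (2 * m).+1))).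
  apply: eqmD.
    by rewrite muln0 bin0 mul1r; exact: S_0.
  apply: eqm_sum => m.
  have -> : (1 - uu) * (('C(2 * bump 0 m + 0, bump 0 m))%:R * Sn (2 * bump 0 m + 0))
     = ('C(2 * m.+1, m.+1))%:R * ((1 - uu) * Sn (2 * m).+2).
    rewrite /bump /= addn0 add1n.
    have -> : (2 * m.+1 = (2 * m).+2)%N by lia.
    ring.
  by apply: eqmM; [exact: eqm_refl | exact: S_rec].
apply: eqmD; first exact: eqm_refl.
have -> : 'X * (\sum_(m < N) ('C(2 * m + 1, m))%:R * Sn (2 * m + 1)
               + \sum_(m < N) ('C(2 * m + 1, m))%:R * Sn (2 * m + 1))
   = \sum_(m < N) ('C(2 * m + 1, m) * 2)%:R * ('X * Sn (2 * m + 1)).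
  by rewrite -big_split mulr_sumr; apply: eq_bigr => m _ /=; rewrite natrM; ring.
rewrite big_ord_recr /=.
apply: eqm_sym; apply: eqm_trans; first apply: eqm_add0.
  by rewrite mulrCA mulrA; apply: S_big; rewrite /N; lia.
apply: eqmEq; apply: eq_bigr => m _.
have -> : ('C(2 * m.+1, m.+1) = 'C(2 * m + 1, m) * 2)%N.
  have -> : (2 * m.+1 = (2 * m + 1).+1)%N by lia.
  rewrite binS muln2 -addnn; congr (_ + _)%N.
  have hm : (m <= 2 * m + 1)%N by lia.
  rewrite -(bin_sub hm); congr binomial; lia.
rewrite natrM addn1; ring.
Qed.
End Part2.


Lemma coef_1X l s : (('X + 1) ^+ l)`_s = ('C(l, s))%:R :> int.
Proof.
elim: l s => [|l IH] s; first by rewrite expr0 coef1; case: s.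
rewrite exprS mulrDl mul1r coefD coefXM; case: s => [|s] /=; rewrite !IH.
  by rewrite add0r !bin0.
by rewrite binS natrD addrC.
Qed.

Lemma coef_uu l t : (uu ^+ l)`_t = if (t < l)%N then 0 else ('C(l, t - l))%:R.
Proof.
have -> : uu ^+ l = 'X^l * ('X + 1) ^+ l by rewrite /uu -exprMn; congr (_ ^+ _); ring.
by rewrite coefXnM coef_1X.
Qed.

Lemma Rsys N' y : eqm N'.+1 ((1 - 'X - 'X^2) * Rn N' (absz y))
   (((y == 0)%:R)%:P + 'X * (Rn N' (absz (y - 1)) + Rn N' (absz (y + 1)))).
Proof.
have -> : 1 - 'X - 'X^2 = 1 - uu by rewrite /uu; ring.
case: (abs_cases y) => [[-> [-> [-> ->]]]|[m [/negPf -> [-> H]]]].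
  by rewrite eqxx polyC1; exact: L0.
rewrite polyC0 add0r.
by case: H => [[-> ->]|[-> ->]]; [|rewrite [Rn N' m.+2 + _]addrC]; exact: L1.
Qed.

Lemma part2_poly N' j : eqm N'.+1 (Pp N'.+1 (Posz j)) (Rn N' j).
Proof.
have hs : forall y, eqm N'.+1 ((1 - 'X - 'X^2) * (Pp N'.+1 y - Rn N' (absz y)))
   ('X * ((Pp N'.+1 (y - 1) - Rn N' (absz (y - 1))) + (Pp N'.+1 (y + 1) - Rn N' (absz (y + 1))))).
  move=> y; rewrite mulrBr.
  apply: eqm_trans; first by apply: eqmB; [exact: Pp_rec | exact: Rsys].
  by apply: eqmEq; ring.
have e := @uniq_sys N'.+1 (fun y => Pp N'.+1 y - Rn N' (absz y)) hs (Posz j).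
move=> k hk; have := e k hk; rewrite /= coefB coef0 => /eqP; rewrite subr_eq0 => /eqP //.
Qed.

Lemma coef_Sn N' n t : (Sn N' n)`_t =
  if (t < n)%N then 0
  else \sum_(l < N'.+2) (if (t - n < l)%N then 0 else ('C(l, t - n - l))%:R) *+ 'C(n + l, l).
Proof.
rewrite /Sn coefXnM; case: ifP => // _.
rewrite /Es coef_sum; apply: eq_bigr => l _.
by rewrite mulr_natl coefMn coef_uu.
Qed.

Theorem part2 : forall i j : nat, (j <= i)%N ->
     g2 i j =
     (\sum_(m < i.+1 | j + 2 * m <= i)
        \sum_(l < (i - j - 2 * m).+1)
           'C(2 * m + j, m) * 'C(l + j + 2 * m, l) * 'C(l, i - j - 2 * m - l))%N.
Proof.
move=> i j hji.
suff : (g2 i j)%:Z = (\sum_(m < i.+1 | j + 2 * m <= i)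
        \sum_(l < (i - j - 2 * m).+1)
           'C(2 * m + j, m) * 'C(l + j + 2 * m, l) * 'C(l, i - j - 2 * m - l))%N%:Z.
  by case.
rewrite g2_Pc.
have hi : (i < i.+1)%N by [].
have := part2_poly i j i hi; rewrite coef_poly hi => ->.
rewrite /Rn coef_sum -natz natr_sum [RHS]big_mkcond /=.
apply: eq_bigr => m _.
rewrite mulr_natl coefMn coef_Sn.
case: ltnP => hm.
  by rewrite mul0rn; case: leqP => //; lia.
have -> : (j + 2 * m <= i)%N by lia.
rewrite natr_sum -sumrMnl.
set t := (i - (2 * m + j))%N.
have ht : (t.+1 <= i.+2)%N by lia.
have tE : (i - j - 2 * m = t)%N by rewrite /t; lia.
rewrite tE (big_ord_widen i.+2 (fun l => ('C(2 * m + j, m) * 'C(l + j + 2 * m, l) * 'C(l, t - l))%N%:R : int) ht).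
rewrite [RHS]big_mkcond; apply: eq_bigr => l _ /=.
rewrite ltnS; have [hl|hl] := leqP l t; last by rewrite /= !mul0rn.
rewrite /=.
have -> : (2 * m + j + l = l + j + 2 * m)%N by lia.
rewrite !mulrn_int !PoszM; ring.
Qed.


Theorem theorem2p2 :
  (forall j : nat, forall n : nat,
     let CF2 := compS Cser (powS Fser 2) in
     mulS (mulS xS (Mser j))
          (addS oneS (scaleS (-2) (mulS (powS Fser 2) CF2))) n
     = mulS (powS Fser j.+1) (powS CF2 j) n)
  /\
  (forall i j : nat, (j <= i)%N ->
     g2 i j =
     (\sum_(m < i.+1 | j + 2 * m <= i)
        \sum_(l < (i - j - 2 * m).+1)
           'C(2 * m + j, m) * 'C(l + j + 2 * m, l) * 'C(l, i - j - 2 * m - l))%N).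
Proof.
split; [exact: part1 | exact: part2].
Qed.
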